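(* Consider a heterogeneous graph whose nodes are the rows of $K$ tables $\mathbf{T}^1,\dots,\mathbf{T}^K$ (node type $=$ table), with edges given by primary-key/foreign-key relations, and let $H\ge 1$. Fix a table $k$ and a column $j$ of $\mathbf{T}^k$, and initialize scalar node embeddings by $\mu^{(0)}_v = t^k_{i'j}$ if $v$ is row $i'$ of table $k$, and $\mu^{(0)}_v=0$ if $v$ is a row of any table $k'\neq k$. Fix a length-$H$ meta-path $\rho_H$ that traverses each table at most once, and for $h=0,\dots,H-1$ update $$\mu_v^{(h+1)} = \sigma\Big(w_0^{(h)}\mu_v^{(h)} + \operatorname{agg}\big[\{w^{(h)}\mu_u^{(h)}\}_{u\in\mathcal{N}_v^{(h)}}\big]\Big),$$ where $\mathcal{N}_v^{(h)}$ is the set of neighbors of $v$ along the (single) edge type of step $h$ of $\rho_H$, $\operatorname{agg}$ is a permutation-invariant aggregation function and $\sigma:\mathbb{R}\to\mathbb{R}$ is an activation. If $\sigma$ and $\operatorname{agg}$ are positively homogeneous functions and $w_0^{(h)}, w^{(h)}\in\mathbb{R}_+$ for all $h$, then without loss of generality this update scheme can be reparameterized with no internal weights (i.e., the weights can be pulled out of the composition so that the output embeddings equal a nonnegative overall scale factor times the embeddings produced by the same scheme with all weights $w_0^{(h)}, w^{(h)}$ set to $1$).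
   Context: A meta-path of length $H$ is a sequence of $H$ edge types (PK–FK relations) connecting properly typed nodes. A function $f$ is positively homogeneous if $f(c\,x)=c\,f(x)$ for all $c\ge 0$ (for $\operatorname{agg}$, applied to the multiset of scaled inputs). A node with no neighbors at step $h$ has $\mathcal{N}_v^{(h)}=\emptyset$, in which case the aggregation term is absent. *)

(* Defs.v *)
From HB Require Import structures.
From mathcomp Require Import all_boot all_order all_algebra.
From mathcomp Require Import reals.
Set Implicit Arguments. Unset Strict Implicit. Unset Printing Implicit Defensive.
Import Order.TTheory GRing.Theory Num.Theory.
Local Open Scope ring_scope.

(* Table i has
   n i rows and m i columns, T i : 'M[R]_(n i, m i).  A node is a pair
   (table index, row index); its node type is its table (tag). *)
Definition node (K : nat) (n : 'I_K -> nat) : finType := {i : 'I_K & 'I_(n i)}.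

Definition init_emb (R : nzRingType) (K : nat) (n m : 'I_K -> nat)
  (T : forall i : 'I_K, 'M[R]_(n i, m i)) (k : 'I_K) (j : 'I_(m k))
  (v : node n) : R :=
  match @eqP _ (tag v) k with
  | ReflectT e => T k (cast_ord (congr1 n e) (tagged v)) j
  | ReflectF _ => 0
  end.

Definition pos_homogeneous (R : realType) (f : R -> R) : Prop :=
  forall c x : R, 0 <= c -> f (c * x) = c * f x.

(* For agg, applied to the multiset (here: list, agg being permutation
   invariant) of scaled inputs. *)
Definition agg_pos_homogeneous (R : realType) (agg : seq R -> R) : Prop :=
  forall (c : R) (s : seq R), 0 <= c -> agg [seq c * x | x <- s] = c * agg s.

Definition perm_invariant (R : realType) (agg : seq R -> R) : Prop :=
  forall s t : seq R, perm_eq s t -> agg s = agg t.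

Fixpoint emb (R : realType) (V : finType) (sigma : R -> R) (agg : seq R -> R)
  (N : nat -> V -> {set V}) (w0 w : nat -> R) (mu0 : V -> R) (h : nat) : V -> R :=
  match h with
  | 0 => mu0
  | h'.+1 => fun v =>
      let mu := emb sigma agg N w0 w mu0 h' in
      if N h' v == set0 then sigma (w0 h' * mu v)
      else sigma (w0 h' * mu v + agg [seq w h' * mu u | u <- enum (N h' v)])
  end.

(* Main.v *)
Require Import Defs.
From HB Require Import structures.
From mathcomp Require Import all_boot all_order all_algebra.
From mathcomp Require Import reals.
Import Order.TTheory GRing.Theory Num.Theory.
Local Open Scope ring_scope.

Lemma sigma0 (R : realType) (sigma : R -> R) : pos_homogeneous sigma -> sigma 0 = 0.
Proof. by move=> hs; have := hs 0 0 (lexx 0); rewrite !mul0r. Qed.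

Lemma agg0 (R : realType) (agg : seq R -> R) (s : seq R) :
  agg_pos_homogeneous agg -> (forall x, x \in s -> x = 0) -> agg s = 0.
Proof.
move=> ha hs.
have -> : s = [seq 0 * x | x <- s].
  rewrite -[LHS]map_id; apply/eq_in_map => x /hs ->; by rewrite mul0r.
by rewrite ha // mul0r.
Qed.

Lemma init_emb0 (R : realType) (K : nat) (n m : 'I_K -> nat)
  (T : forall i : 'I_K, 'M[R]_(n i, m i)) (k : 'I_K) (j : 'I_(m k)) (v : node n) :
  tag v != k -> init_emb T j v = 0.
Proof. rewrite /init_emb; case: eqP => // e; by rewrite e eqxx. Qed.

Lemma Zlem (R : realType) (K : nat) (n m : 'I_K -> nat)
  (T : forall i : 'I_K, 'M[R]_(n i, m i)) (k : 'I_K) (j : 'I_(m k))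
  (H : nat) (a : nat -> 'I_K) (N : nat -> node n -> {set node n})
  (sigma : R -> R) (agg : seq R -> R) (w0 w : nat -> R) (q0 : nat) :
  (forall h1 h2, (h1 <= H)%N -> (h2 <= H)%N -> a h1 = a h2 -> h1 = h2) ->
  (forall h u v, (h < H)%N -> u \in N h v ->
     (tag u = a h /\ tag v = a h.+1) \/ (tag u = a h.+1 /\ tag v = a h)) ->
  pos_homogeneous sigma ->
  agg_pos_homogeneous agg ->
  (forall q, (q <= H)%N -> q != q0 -> a q != k) ->
  forall h, (h <= H)%N -> forall q v, (h <= q)%N -> (q <= H)%N -> q != q0 ->
    ((h < q) || (h < q0))%N -> tag v = a q ->
    emb sigma agg N w0 w (init_emb T j) h v = 0.
Proof.
move=> ainj hN hs ha hk; elim=> [|h IH] hH q v hq qH qq0 hlt tv.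
  by apply: init_emb0; rewrite tv; apply: hk.
have hH' : (h <= H)%N by apply: ltnW.
have selfz : emb sigma agg N w0 w (init_emb T j) h v = 0.
  apply: (IH hH' q) => //; first by apply: ltnW.
  by case/orP: hlt => hl; apply/orP; first [left; exact: ltnW hl | right; exact: ltnW hl].
rewrite /= selfz mulr0.
case: ifP => _; first by apply: sigma0.
rewrite add0r agg0 ?sigma0 //.
move=> x /mapP [u]; rewrite mem_enum => uN ->.
case: (hN h u v hH uN) => [[tu tv']|[tu tv']].
- have eq : q = h.+1 by apply: ainj => //; rewrite -tv -tv'.
  subst q.
  have hq0 : (h < q0)%N by move: hlt; rewrite ltnn /= => /ltnW.
  rewrite (IH hH' h u) ?mulr0 //; last by rewrite hq0 orbT.
  by rewrite neq_ltn hq0.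
- have eq : q = h by apply: ainj => //; rewrite -tv -tv'.
  by subst q; move: hq; rewrite ltnn.
Qed.

Theorem proposition3p2
  (R : realType) (K : nat) (n m : 'I_K -> nat)
  (T : forall i : 'I_K, 'M[R]_(n i, m i)) (k : 'I_K) (j : 'I_(m k))
  (H : nat) (a : nat -> 'I_K) (N : nat -> node n -> {set node n})
  (sigma : R -> R) (agg : seq R -> R) (w0 w : nat -> R) :
  (0 < H)%N ->
  (* the meta-path visits tables a 0, ..., a H, each at most once *)
  (forall h1 h2, (h1 <= H)%N -> (h2 <= H)%N -> a h1 = a h2 -> h1 = h2) ->
  (* neighbours along the edge type of step h connect tables a h and a h.+1 *)
  (forall h u v, (h < H)%N -> u \in N h v ->
     (tag u = a h /\ tag v = a h.+1) \/ (tag u = a h.+1 /\ tag v = a h)) ->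
  perm_invariant agg ->
  pos_homogeneous sigma ->
  agg_pos_homogeneous agg ->
  (forall h, (h < H)%N -> 0 <= w0 h /\ 0 <= w h) ->
  exists c : R, 0 <= c /\
    forall v : node n, tag v = a H ->
      emb sigma agg N w0 w (init_emb T j) H v
      = c * emb sigma agg N (fun _ => 1) (fun _ => 1) (init_emb T j) H v.
Proof.
move=> H0 ainj hN hperm hs ha hw.
case: (boolP [exists q : 'I_H.+1, a q == k]) => [/existsP [q0' /eqP aq0] | /existsPn noq].
- have q0H : (q0' <= H)%N by rewrite -ltnS ltn_ord.
  have [q0 {}aq0 {}q0H] : exists2 q0, a q0 = k & (q0 <= H)%N by exists q0'.
  clear q0'.
  have hk : forall q, (q <= H)%N -> q != q0 -> a q != k.
    move=> q qH qq0; apply/eqP => e; move/eqP: qq0; apply.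
    by apply: ainj => //; rewrite e aq0.
  have ZW := @Zlem _ _ _ _ T k j H a N sigma agg w0 w q0 ainj hN hs ha hk.
  have ZU := @Zlem _ _ _ _ T k j H a N sigma agg (fun _ => 1) (fun _ => 1) q0 ainj hN hs ha hk.
  suff claim : forall h, (h <= H)%N -> exists c : R, 0 <= c /\
    forall v : node n, tag v = a (maxn h q0) ->
      emb sigma agg N w0 w (init_emb T j) h v
      = c * emb sigma agg N (fun _ => 1) (fun _ => 1) (init_emb T j) h v.
    have [c [c0 Hc]] := claim H (leqnn H).
    exists c; split => // v tv; apply: Hc.
    by have -> : maxn H q0 = H by apply/maxn_idPl.
  elim=> [|h IH] hH.
    by exists 1; split => // v _; rewrite mul1r.
  have [c [c0 Hc]] := IH (ltnW hH).
  have [hw0 hw1] := hw h hH.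
  case: (ltnP h q0) => hq.
  + have e1 : maxn h q0 = q0 by apply/maxn_idPr/ltnW.
    have e2 : maxn h.+1 q0 = q0 by apply/maxn_idPr.
    rewrite e1 in Hc; rewrite e2.
    exists (w0 h * c); split; first by apply: mulr_ge0.
    move=> v tv /=.
    have nbz : forall u, u \in N h v ->
      emb sigma agg N w0 w (init_emb T j) h u = 0 /\
      emb sigma agg N (fun _ => 1) (fun _ => 1) (init_emb T j) h u = 0.
      move=> u uN; case: (hN h u v hH uN) => [[tu _]|[_ tv']].
        have hh : (h <= H)%N by apply: ltnW.
        have hq0 : h != q0 by rewrite neq_ltn hq.
        by split; [apply: (ZW h hh h) | apply: (ZU h hh h)]; rewrite ?leqnn ?hq ?orbT.
      have : q0 = h by apply: ainj => //; [apply: ltnW | rewrite -tv -tv'].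
      by move=> e; move: hq; rewrite e ltnn.
    case: ifP => _; first by rewrite Hc // mul1r mulrA hs // mulr_ge0.
    rewrite (@agg0 _ agg [seq w h * _ u | u <- _]) //; last first.
      by move=> x /mapP [u]; rewrite mem_enum => /nbz [-> _] ->; rewrite mulr0.
    rewrite (@agg0 _ agg [seq 1 * _ u | u <- _]) //; last first.
      by move=> x /mapP [u]; rewrite mem_enum => /nbz [_ ->] ->; rewrite mulr0.
    by rewrite !addr0 Hc // mul1r mulrA hs // mulr_ge0.
  + have e1 : maxn h q0 = h by apply/maxn_idPl.
    have e2 : maxn h.+1 q0 = h.+1 by apply/maxn_idPl/(leq_trans hq).
    rewrite e1 in Hc; rewrite e2.
    exists (w h * c); split; first by apply: mulr_ge0.
    move=> v tv /=.
    have hh : (h <= H)%N by apply: ltnW.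
    have hq0 : h.+1 != q0 by rewrite eq_sym neq_ltn ltnS hq.
    rewrite (ZW h hh h.+1) ?ltnSn //.
    rewrite (ZU h hh h.+1) ?ltnSn // !mulr0 !add0r.
    case: ifP => _; first by rewrite sigma0 // mulr0.
    have -> : [seq w h * emb sigma agg N w0 w (init_emb T j) h u | u <- enum (N h v)]
      = [seq (w h * c) * x | x <- [seq 1 * emb sigma agg N (fun _ => 1) (fun _ => 1) (init_emb T j) h u | u <- enum (N h v)]].
      rewrite -map_comp; apply/eq_in_map => u; rewrite mem_enum => uN /=.
      case: (hN h u v hH uN) => [[tu _]|[_ tv']].
        by rewrite Hc // mul1r mulrA.
      have : h.+1 = h by apply: ainj => //; rewrite -tv -tv'.
      by move=> e; have := ltnSn h; rewrite {2}e ltnn.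
    by rewrite ha ?mulr_ge0 // hs ?mulr_ge0.
- have hk : forall q, (q <= H)%N -> q != H.+1 -> a q != k.
    move=> q qH _; have := noq (Ordinal (qH : (q < H.+1)%N)); by [].
  exists 0; split => // v tv; rewrite mul0r.
  apply: (@Zlem _ _ _ _ T k j H a N sigma agg w0 w H.+1 ainj hN hs ha hk H (leqnn H) H v (leqnn H) (leqnn H)) => //.
    by rewrite neq_ltn ltnSn.
  by rewrite ltnSn orbT.
Qed.
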